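(* Assume the orthonormality assumption (A), let $T\ge 2$ and $z_{1:T}\in[V]^T$ with $z_T=q$ and $z_1\neq q$. Let $v_1\neq v_2$ in $[V]$ and suppose the only patterns ''$q\,v$'' occurring in $z_{1:T}$ are $q\,v_1$ and $q\,v_2$, i.e. $f(v)=0$ for all $v\notin\{v_1,v_2\}$, with $f(v_1)+f(v_2)\ge 1$. For fixed $\tau_3>0$ let $\xi^*_v=\lim_{\tau_2\to\infty}\lim_{\tau_1\to\infty}\xi_v(\tau_1,\tau_2,\tau_3)$. Then every maximizer of $v\mapsto\xi^*_v$ over $[V]$ belongs to $\{v_1,v_2\}\cup\operatorname{argmax}_{v\in[V]\setminus\{v_1,v_2\}}\pi_b(v\mid q)$.
   Context: Vocabulary $[V]=\{1,\dots,V\}$, dimension $d$. Given: embedding vectors $w_E(v)\in\mathbb R^d$ and unembedding vectors $w_U(v)\in\mathbb R^d$ for $v\in[V]$; relative positional vectors $r_0,r_{-1},\dots,r_{-(T-1)}\in\mathbb R^d$; matrices $\Phi_1,W_V^2\in\mathbb R^{d\times d}$; a bigram kernel $\pi_b(u\mid v)>0$ with $\sum_u\pi_b(u\mid v)=1$; parameters $\tau_1,\tau_2,\tau_3>0$. $\sigma$ denotes the softmax. The two-layer transformer with relative positional encoding (''stronger associative memory transformer'') acts on $z_{1:T}\in[V]^T$ as follows. Set $W_K^1=\tau_1\sum_{k\in[V]}w_E(k)r_{-1}^\top$, $W_K^2=\tau_2\sum_{k\in[V]}w_E(k)(\Phi_1w_E(k))^\top$, $W_O^2=\tau_3\sum_{v\in[V]}w_U(v)(W_V^2w_E(v))^\top$.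 First layer: for $t\in[T]$ and $s\in[t]$, let $a_{t,s}=(w_E(z_s)+r_{s-t})^\top (W_K^1)^\top w_E(z_t)$ and $x^{(1)}_t=\sum_{s=1}^t\sigma(a_{t,\cdot})_s\,\Phi_1w_E(z_s)+w_E(z_t)$. Second layer: for $s\in[T]$ let $b_s=(x_s^{(1)})^\top (W_K^2)^\top x_T^{(1)}$ and $x_T^{(2)}=\sum_{s=1}^T\sigma(b)_s\,W_O^2W_V^2x_s^{(1)}+x_T^{(1)}$. Feed-forward layer: $W_1\in\mathbb R^{V\times d}$ has $v$-th row $w_E(v)^\top$, $W_2\in\mathbb R^{d\times V}$ has $v$-th column $\sum_{u=1}^V\log\pi_b(u\mid v)\,w_U(u)$, and $x_T=W_2\,\mathrm{ReLU}(W_1x_T^{(2)})+x_T^{(2)}$. The logits are $\xi_v=w_U(v)^\top x_T$ for $v\in[V]$ (written $\xi_v(\tau_1,\tau_2,\tau_3)$ to show dependence on the parameters). Orthonormality assumption (A): the $3V+T$ vectors $w_E(v),\ \Phi_1w_E(v),\ w_U(v)$ ($v\in[V]$) and $r_{-i}$ ($0\le i\le T-1$) form an orthonormal family in $\mathbb R^d$, and the $2V$ vectors $W_V^2w_E(v),\ W_V^2\Phi_1w_E(v)$ ($v\in[V]$) form an orthonormal family in $\mathbb R^d$. For $v\in[V]$, $f(v)=\#\{s\in\{2,\dots,T\}: z_{s-1}=q,\ z_s=v\}$. *)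

(* Defs.v *)
From HB Require Import structures.
From mathcomp Require Import all_boot all_order all_algebra.
From mathcomp Require Import all_classical all_reals all_analysis.
Set Implicit Arguments. Unset Strict Implicit. Unset Printing Implicit Defensive.
Import Order.TTheory GRing.Theory Num.Theory.
Local Open Scope ring_scope.

(* Vocabulary [V] is rendered as 'I_V (0-based labels; only labels matter).
   rpos i = r_{-i}  (only 0 <= i <= T-1 is ever used).
   pib u v = pi_b(u | v). *)
Record model (R : realType) (V d : nat) := Model {
  wE : 'I_V -> 'cV[R]_d;
  wU : 'I_V -> 'cV[R]_d;
  rpos : nat -> 'cV[R]_d;
  Phi1 : 'M[R]_d;
  WV2 : 'M[R]_d;
  pib : 'I_V -> 'I_V -> R }.

Section Transformer.
Context {R : realType} {V d : nat}.

Definition dotv (u v : 'cV[R]_d) : R := (u^T *m v) 0 0.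

Definition WK1 (M : model R V d) (tau1 : R) : 'M[R]_d :=
  tau1 *: \sum_(k < V) (wE M k *m (rpos M 1)^T).
Definition WK2 (M : model R V d) (tau2 : R) : 'M[R]_d :=
  tau2 *: \sum_(k < V) (wE M k *m (Phi1 M *m wE M k)^T).
Definition WO2 (M : model R V d) (tau3 : R) : 'M[R]_d :=
  tau3 *: \sum_(v < V) (wU M v *m (WV2 M *m wE M v)^T).

(* positions are 1..T; z : nat -> 'I_V, only z 1, ..., z T matter *)
(* first-layer attention score a_{t,s}, with r_{s-t} = r_{-(t-s)} *)
Definition att1 (M : model R V d) (z : nat -> 'I_V) (tau1 : R) (t s : nat) : R :=
  dotv (wE M (z s) + rpos M (t - s)) ((WK1 M tau1)^T *m wE M (z t)).

Definition x1 (M : model R V d) (z : nat -> 'I_V) (tau1 : R) (t : nat) : 'cV[R]_d :=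
  \sum_(1 <= s < t.+1)
     (expR (att1 M z tau1 t s) / \sum_(1 <= s' < t.+1) expR (att1 M z tau1 t s'))
       *: (Phi1 M *m wE M (z s))
  + wE M (z t).

Definition att2 (M : model R V d) (z : nat -> 'I_V) (T : nat) (tau1 tau2 : R) (s : nat) : R :=
  dotv (x1 M z tau1 s) ((WK2 M tau2)^T *m x1 M z tau1 T).

Definition x2 (M : model R V d) (z : nat -> 'I_V) (T : nat) (tau1 tau2 tau3 : R) : 'cV[R]_d :=
  \sum_(1 <= s < T.+1)
     (expR (att2 M z T tau1 tau2 s) / \sum_(1 <= s' < T.+1) expR (att2 M z T tau1 tau2 s'))
       *: (WO2 M tau3 *m WV2 M *m x1 M z tau1 s)
  + x1 M z tau1 T.

Definition W1 (M : model R V d) : 'M[R]_(V, d) := \matrix_(v < V, j < d) wE M v j 0.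
Definition W2 (M : model R V d) : 'M[R]_(d, V) :=
  \matrix_(j < d, v < V) (\sum_(u < V) ln (pib M u v) *: wU M u) j 0.
Definition relu {n : nat} (x : 'cV[R]_n) : 'cV[R]_n := map_mx (fun a => Num.max a 0) x.

Definition xT (M : model R V d) (z : nat -> 'I_V) (T : nat) (tau1 tau2 tau3 : R) : 'cV[R]_d :=
  W2 M *m relu (W1 M *m x2 M z T tau1 tau2 tau3) + x2 M z T tau1 tau2 tau3.

Definition logit (M : model R V d) (z : nat -> 'I_V) (T : nat) (tau1 tau2 tau3 : R) (v : 'I_V) : R :=
  dotv (wU M v) (xT M z T tau1 tau2 tau3).

Definition family1 (M : model R V d) (T : nat) (i : ('I_V + 'I_V + 'I_V + 'I_T)%type) : 'cV[R]_d :=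
  match i with
  | inl (inl (inl v)) => wE M v
  | inl (inl (inr v)) => Phi1 M *m wE M v
  | inl (inr v) => wU M v
  | inr i => rpos M i
  end.
Arguments family1 M T i : clear implicits.
Definition family2 (M : model R V d) (i : ('I_V + 'I_V)%type) : 'cV[R]_d :=
  match i with
  | inl v => WV2 M *m wE M v
  | inr v => WV2 M *m (Phi1 M *m wE M v)
  end.
Definition orthonormality_A (M : model R V d) (T : nat) : Prop :=
  (forall i j, dotv (family1 M T i) (family1 M T j) = (i == j)%:R) /\
  (forall i j, dotv (family2 M i) (family2 M j) = (i == j)%:R).

Definition fcount (z : nat -> 'I_V) (T : nat) (q v : 'I_V) : nat :=
  count (fun s => (z s.-1 == q) && (z s == v)) (index_iota 2 T.+1).

End Transformer.

(* Main.v *)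
Require Import Defs.
From HB Require Import structures.
From mathcomp Require Import all_boot all_order all_algebra.
From mathcomp Require Import all_classical all_reals all_analysis.
From mathcomp Require Import zify ring lra.
Import Order.TTheory GRing.Theory Num.Theory.
Import numFieldNormedType.Exports.
Local Open Scope classical_set_scope.
Local Open Scope ring_scope.



Lemma dotvDl (R : realType) d (a b c : 'cV[R]_d) : dotv (a + b) c = dotv a c + dotv b c.
Proof. by rewrite /dotv linearD /= mulmxDl mxE. Qed.
Lemma dotvDr (R : realType) d (a b c : 'cV[R]_d) : dotv c (a + b) = dotv c a + dotv c b.
Proof. by rewrite /dotv mulmxDr mxE. Qed.
Lemma dotvZl (R : realType) d k (a c : 'cV[R]_d) : dotv (k *: a) c = k * dotv a c.
Proof. by rewrite /dotv linearZ /= -scalemxAl mxE. Qed.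
Lemma dotvZr (R : realType) d k (a c : 'cV[R]_d) : dotv c (k *: a) = k * dotv c a.
Proof. by rewrite /dotv -scalemxAr mxE. Qed.
Lemma dotv_sumr (R : realType) d (I : Type) (r : seq I) (P : pred I) (F : I -> 'cV[R]_d) c :
  dotv c (\sum_(i <- r | P i) F i) = \sum_(i <- r | P i) dotv c (F i).
Proof. by rewrite /dotv mulmx_sumr summxE. Qed.
Lemma dotv_suml (R : realType) d (I : Type) (r : seq I) (P : pred I) (F : I -> 'cV[R]_d) c :
  dotv (\sum_(i <- r | P i) F i) c = \sum_(i <- r | P i) dotv (F i) c.
Proof. by rewrite /dotv linear_sum /= mulmx_suml summxE. Qed.
Lemma dotvC (R : realType) d (a b : 'cV[R]_d) : dotv a b = dotv b a.
Proof. by rewrite /dotv -[a^T *m b]trmxK trmx_mul trmxK mxE. Qed.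
Lemma outer_mul (R : realType) d (a b c : 'cV[R]_d) : (a *m b^T) *m c = dotv b c *: a.
Proof. by rewrite -mulmxA [b^T *m c]mx11_scalar mul_mx_scalar. Qed.
Lemma outerT_mul (R : realType) d (a b c : 'cV[R]_d) : (a *m b^T)^T *m c = dotv a c *: b.
Proof. by rewrite trmx_mul trmxK outer_mul. Qed.
Lemma dotv_mul (R : realType) d (a b : 'cV[R]_d) (A : 'M[R]_d) : dotv a (A *m b) = dotv (A^T *m a) b.
Proof. by rewrite /dotv trmx_mul trmxK mulmxA. Qed.



Lemma on_ee {R : realType} {V d T : nat} {M : model R V d} : orthonormality_A M T ->
  forall v w, dotv (wE M v) (wE M w) = (v == w)%:R.
Proof. by move=> [H _] v w; have := H (inl (inl (inl v))) (inl (inl (inl w))). Qed.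
Lemma on_pp {R : realType} {V d T : nat} {M : model R V d} : orthonormality_A M T ->
  forall v w, dotv (Phi1 M *m wE M v) (Phi1 M *m wE M w) = (v == w)%:R.
Proof. by move=> [H _] v w; have := H (inl (inl (inr v))) (inl (inl (inr w))). Qed.
Lemma on_uu {R : realType} {V d T : nat} {M : model R V d} : orthonormality_A M T ->
  forall v w, dotv (wU M v) (wU M w) = (v == w)%:R.
Proof. by move=> [H _] v w; have := H (inl (inr v)) (inl (inr w)). Qed.
Lemma on_ep {R : realType} {V d T : nat} {M : model R V d} : orthonormality_A M T ->
  forall v w, dotv (wE M v) (Phi1 M *m wE M w) = 0.
Proof. by move=> [H _] v w; have := H (inl (inl (inl v))) (inl (inl (inr w))). Qed.
Lemma on_eu {R : realType} {V d T : nat} {M : model R V d} : orthonormality_A M T ->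
  forall v w, dotv (wE M v) (wU M w) = 0.
Proof. by move=> [H _] v w; have := H (inl (inl (inl v))) (inl (inr w)). Qed.
Lemma on_pu {R : realType} {V d T : nat} {M : model R V d} : orthonormality_A M T ->
  forall v w, dotv (Phi1 M *m wE M v) (wU M w) = 0.
Proof. by move=> [H _] v w; have := H (inl (inl (inr v))) (inl (inr w)). Qed.
Lemma on_er {R : realType} {V d T : nat} {M : model R V d} : orthonormality_A M T ->
  forall v i, (i < T)%N -> dotv (wE M v) (rpos M i) = 0.
Proof. by move=> [H _] v i iT; have := H (inl (inl (inl v))) (inr (Ordinal iT)). Qed.
Lemma on_rr {R : realType} {V d T : nat} {M : model R V d} : orthonormality_A M T ->
  forall i j, (i < T)%N -> (j < T)%N -> dotv (rpos M i) (rpos M j) = (i == j)%:R.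
Proof. by move=> [H _] i j iT jT; have := H (inr (Ordinal iT)) (inr (Ordinal jT)). Qed.
Lemma on_2ee {R : realType} {V d T : nat} {M : model R V d} : orthonormality_A M T ->
  forall v w, dotv (WV2 M *m wE M v) (WV2 M *m wE M w) = (v == w)%:R.
Proof. by move=> [_ H] v w; have := H (inl v) (inl w). Qed.
Lemma on_2ep {R : realType} {V d T : nat} {M : model R V d} : orthonormality_A M T ->
  forall v w, dotv (WV2 M *m wE M v) (WV2 M *m (Phi1 M *m wE M w)) = 0.
Proof. by move=> [_ H] v w; have := H (inl v) (inr w). Qed.



Lemma x1_dot (R : realType) V d (M : model R V d) z tau1 t (y : 'cV[R]_d) :
  dotv y (x1 M z tau1 t) =
  \sum_(1 <= s < t.+1)
     (expR (att1 M z tau1 t s) / \sum_(1 <= s' < t.+1) expR (att1 M z tau1 t s'))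
       * dotv y (Phi1 M *m wE M (z s)) + dotv y (wE M (z t)).
Proof. by rewrite /x1 dotvDr dotv_sumr; congr (_ + _); apply: eq_bigr => s _; rewrite dotvZr. Qed.

Lemma WV2_x1_dot (R : realType) V d (M : model R V d) z tau1 t (y : 'cV[R]_d) :
  dotv y (WV2 M *m x1 M z tau1 t) =
  \sum_(1 <= s < t.+1)
     (expR (att1 M z tau1 t s) / \sum_(1 <= s' < t.+1) expR (att1 M z tau1 t s'))
       * dotv y (WV2 M *m (Phi1 M *m wE M (z s))) + dotv y (WV2 M *m wE M (z t)).
Proof.
rewrite /x1 mulmxDr mulmx_sumr dotvDr dotv_sumr; congr (_ + _).
by apply: eq_bigr => s _; rewrite -scalemxAr dotvZr.
Qed.

Lemma sum_delta_v (R : realType) V d (F : 'I_V -> 'cV[R]_d) w :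
  \sum_(k < V) (k == w)%:R *: F k = F w.
Proof.
rewrite (bigD1 w) //= eqxx scale1r big1 ?addr0 // => k /negbTE ->.
by rewrite scale0r.
Qed.

Lemma sum_delta_s (R : realType) V (F : 'I_V -> R) w :
  \sum_(k < V) (k == w)%:R * F k = F w.
Proof.
rewrite (bigD1 w) //= eqxx mul1r big1 ?addr0 // => k /negbTE ->.
by rewrite mul0r.
Qed.

Lemma WKT (R : realType) V d (a b : 'I_V -> 'cV[R]_d) (x : 'cV[R]_d) :
  (\sum_(k < V) (a k *m (b k)^T))^T *m x = \sum_(k < V) dotv (a k) x *: b k.
Proof.
rewrite linear_sum /= mulmx_suml; apply: eq_bigr => k _.
by rewrite outerT_mul.
Qed.

Lemma att1_eq {R : realType} {V d T : nat} {M : model R V d} z tau1 t s :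
  orthonormality_A M T -> (1 < T)%N -> (1 <= s)%N -> (s <= t)%N -> (t <= T)%N ->
  att1 M z tau1 t s = tau1 * (t - s == 1)%N%:R.
Proof.
move=> H T1 s1 st tT; rewrite /att1.
have -> : (WK1 M tau1)^T *m wE M (z t) = tau1 *: rpos M 1.
  rewrite /WK1 linearZ /= -scalemxAl WKT.
  under eq_bigr => k _ do rewrite (on_ee H).
  by rewrite sum_delta_v.
rewrite dotvZr dotvDl (on_er H) // (on_rr H) //; last by lia.
by rewrite add0r.
Qed.

Definition gq {R : realType} {V d : nat} (M : model R V d) z tau1 (q : 'I_V) s :=
  dotv (Phi1 M *m wE M q) (x1 M z tau1 s).

Lemma gq_eq {R : realType} {V d T : nat} {M : model R V d} z tau1 q s :
  orthonormality_A M T ->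
  gq M z tau1 q s =
  \sum_(1 <= s' < s.+1)
     (expR (att1 M z tau1 s s') / \sum_(1 <= s'' < s.+1) expR (att1 M z tau1 s s''))
       * (q == z s')%:R.
Proof.
move=> H; rewrite /gq x1_dot dotvC (on_ep H) addr0.
by apply: eq_bigr => s' _; rewrite (on_pp H).
Qed.

Lemma att2_eq {R : realType} {V d T : nat} {M : model R V d} z tau1 tau2 s :
  orthonormality_A M T ->
  att2 M z T tau1 tau2 s = tau2 * gq M z tau1 (z T) s.
Proof.
move=> H; rewrite /att2.
have -> : (WK2 M tau2)^T *m x1 M z tau1 T = tau2 *: (Phi1 M *m wE M (z T)).
  rewrite /WK2 linearZ /= -scalemxAl WKT.
  rewrite (eq_bigr (fun k => (k == z T)%:R *: (Phi1 M *m wE M k))) ?sum_delta_v //.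
  move=> k _; rewrite x1_dot (on_ee H) big1 ?add0r // => i _.
  by rewrite (on_ep H) mulr0.
by rewrite dotvZr dotvC.
Qed.

Lemma WO2_eq {R : realType} {V d T : nat} {M : model R V d} z tau1 tau3 s :
  orthonormality_A M T ->
  WO2 M tau3 *m WV2 M *m x1 M z tau1 s = tau3 *: wU M (z s).
Proof.
move=> H; rewrite -mulmxA /WO2 -scalemxAl mulmx_suml.
rewrite (eq_bigr (fun v => (v == z s)%:R *: wU M v)) ?sum_delta_v //.
move=> v _; rewrite outer_mul WV2_x1_dot (on_2ee H) big1 ?add0r // => i _.
by rewrite (on_2ep H) mulr0.
Qed.



Lemma W1_entry (R : realType) V d (M : model R V d) (x : 'cV[R]_d) v :
  (W1 M *m x) v 0 = dotv (wE M v) x.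
Proof. by rewrite !mxE /dotv mxE; apply: eq_bigr => j _; rewrite !mxE. Qed.

Definition beta {R : realType} {V d : nat} (M : model R V d) z T tau1 tau2 s :=
  expR (tau2 * gq M z tau1 (z T) s) /
    \sum_(1 <= s' < T.+1) expR (tau2 * gq M z tau1 (z T) s').

Lemma logit_eq (R : realType) V d T (M : model R V d) z tau1 tau2 tau3 v :
  orthonormality_A M T ->
  logit M z T tau1 tau2 tau3 v =
  ln (pib M v (z T)) + tau3 * \sum_(1 <= s < T.+1) (beta M z T tau1 tau2 s * (v == z s)%:R).
Proof.
move=> H.
have Hx2 : x2 M z T tau1 tau2 tau3 =
    \sum_(1 <= s < T.+1) (beta M z T tau1 tau2 s * tau3) *: wU M (z s) + x1 M z tau1 T.
  rewrite /x2; congr (_ + _); apply: eq_bigr => s _.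
  rewrite (WO2_eq _ _ _ _ H) scalerA /beta; congr ((_ / _ * _) *: _).
    by rewrite (att2_eq _ _ _ _ H).
  by apply: eq_bigr => s' _; rewrite (att2_eq _ _ _ _ H).
have He : forall w, dotv (wE M w) (x2 M z T tau1 tau2 tau3) = (w == z T)%:R.
  move=> w; rewrite Hx2 dotvDr dotv_sumr big1 ?add0r.
    rewrite x1_dot (on_ee H) big1 ?add0r // => i _.
    by rewrite (on_ep H) mulr0.
  by move=> i _; rewrite dotvZr (on_eu H) mulr0.
have mx : forall b : bool, Num.max (b%:R : R) 0 = b%:R.
  by case => /=; [rewrite max_l ?ler01 | rewrite maxxx].
have HW : W2 M *m relu (W1 M *m x2 M z T tau1 tau2 tau3) =
    \sum_(u < V) ln (pib M u (z T)) *: wU M u.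
  apply/matrixP => j k; rewrite (ord1 k) !mxE.
  rewrite (eq_bigr (fun w => (w == z T)%:R *
     (\sum_(u < V) ln (pib M u w) *: wU M u) j 0)) ?sum_delta_s //.
  by move=> w _; rewrite mxE mxE W1_entry He mx mulrC.
rewrite /logit /xT HW Hx2 !dotvDr !dotv_sumr.
rewrite (eq_bigr (fun u => (u == v)%:R * ln (pib M u (z T)))); last first.
  by move=> u _; rewrite dotvZr (on_uu H) eq_sym mulrC.
rewrite sum_delta_s [dotv (wU M v) (wE M _)]dotvC (on_eu H) addr0.
rewrite [\sum_(1 <= i < T.+1) dotv (wU M v) (_ *: (Phi1 M *m _))]big1 ?add0r ?addr0; last first.
  by move=> i _; rewrite dotvZr dotvC (on_pu H) mulr0.
congr (_ + _); rewrite mulr_sumr; apply: eq_bigr => s _.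
by rewrite dotvZr (on_uu H); ring.
Qed.



Lemma key_lim (R : realType) (a c n m : R) : 0 < n -> n <= m ->
  (a + (expR t - 1) * c) / ((expR t - 1) * n + m) @[t --> +oo] --> c / n.
Proof.
move=> n0 nm.
set K := n * a - c * m.
set C := `|K| / (n * n).
have bnd : forall t, `|(a + (expR t - 1) * c) / ((expR t - 1) * n + m) - c / n|
     <= C * expR (- t).
  move=> t; have E0 := expR_gt0 t.
  have D0 : expR t * n <= (expR t - 1) * n + m by nra.
  have D0' : 0 < (expR t - 1) * n + m by nra.
  have -> : (a + (expR t - 1) * c) / ((expR t - 1) * n + m) - c / n =
      K / (n * ((expR t - 1) * n + m)).
    by rewrite /K; field; apply/andP; split; rewrite gt_eqF.
  rewrite normrM normfV [`|n * _|]ger0_norm; last by apply: ltW; apply: mulr_gt0.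
  rewrite /C expRN -mulrA -invfM ler_wpM2l //.
  rewrite lef_pV2 ?posrE ?mulr_gt0 //; nra.
apply: (@squeeze_cvgr _ _ _ _ (fun t => c / n - C * expR (- t)) (fun t => c / n + C * expR (- t))).
- apply: nearW => t; rewrite -ler_distl; exact: bnd.
- rewrite -[X in _ --> X]subr0 -[X in _ - X](mulr0 C).
  apply: cvgB; first exact: cvg_cst.
  apply: cvgM; first exact: cvg_cst.
  exact: cvgr_expR.
- rewrite -[X in _ --> X]addr0 -[X in _ + X](mulr0 C).
  apply: cvgD; first exact: cvg_cst.
  apply: cvgM; first exact: cvg_cst.
  exact: cvgr_expR.
Qed.



Lemma delta_nat (R : realType) m n k (c : nat -> R) : (m <= k < n)%N ->
  \sum_(m <= i < n) (i == k)%:R * c i = c k.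
Proof.
move=> kmn; rewrite (bigD1_seq k) ?mem_index_iota //=; last exact: iota_uniq.
rewrite eqxx mul1r big1 ?addr0 // => i /negbTE ->; by rewrite mul0r.
Qed.

Lemma expR_bool (R : realType) (x : R) (b : bool) : expR (x * b%:R) = 1 + (expR x - 1) * b%:R.
Proof. by case: b; rewrite ?mulr1 ?mulr0 ?expR0; ring. Qed.

Lemma sum_ind (R : realType) s (x : R) (c : nat -> R) : (2 <= s)%N ->
  \sum_(1 <= i < s.+1) (1 + x * (s - i == 1)%N%:R) * c i =
  \sum_(1 <= i < s.+1) c i + x * c s.-1.
Proof.
move=> s2.
rewrite (eq_bigr (fun i => c i + x * ((i == s.-1)%:R * c i))); last first.
  move=> i _; have -> : (s - i == 1)%N = (i == s.-1).
    by apply/eqP/eqP; lia.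
  ring.
by rewrite big_split /= -mulr_sumr delta_nat //; lia.
Qed.

Lemma cvg_sum_nat (R : realType) (U : Type) (F : set_system U) {FF : Filter F}
  (r : seq nat) (f : nat -> U -> R) (a : nat -> R) :
  (forall i, i \in r -> f i x @[x --> F] --> a i) ->
  \sum_(i <- r) f i x @[x --> F] --> \sum_(i <- r) a i.
Proof.
elim: r => [|i r IH] H.
  under eq_cvg do rewrite big_nil.
  by rewrite big_nil; exact: cvg_cst.
under eq_cvg do rewrite big_cons.
rewrite big_cons; apply: cvgD.
  by apply: H; rewrite mem_head.
by apply: IH => j jr; apply: H; rewrite in_cons jr orbT.
Qed.

Lemma cvg_expR_comp (R : realType) (U : Type) (F : set_system U) {FF : Filter F}
  (f : U -> R) a : f x @[x --> F] --> a -> expR (f x) @[x --> F] --> expR a.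
Proof. by move=> H; exact: (continuous_cvg _ (@continuous_expR R a) H). Qed.

Definition Gb {V : nat} (z : nat -> 'I_V) (q : 'I_V) (s : nat) : bool :=
  if s == 1%N then q == z 1%N else q == z s.-1.

Lemma gq_lim {R : realType} {V d T : nat} {M : model R V d} z q s :
  orthonormality_A M T -> (1 < T)%N -> (1 <= s)%N -> (s <= T)%N ->
  gq M z tau1 q s @[tau1 --> +oo] --> ((Gb z q s)%:R : R).
Proof.
move=> H T1 s1 sT.
have E : forall tau1 : R, gq M z tau1 q s =
   \sum_(1 <= s' < s.+1) expR (tau1 * (s - s' == 1)%N%:R) /
     (\sum_(1 <= s'' < s.+1) expR (tau1 * (s - s'' == 1)%N%:R)) * (q == z s')%:R.
  move=> tau1; rewrite (gq_eq _ _ _ _ H).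
  have -> : \sum_(1 <= s'' < s.+1) expR (att1 M z tau1 s s'') =
      \sum_(1 <= s'' < s.+1) expR (tau1 * (s - s'' == 1)%N%:R).
    by apply: eq_big_nat => j /andP[j1 js]; rewrite (att1_eq _ _ _ _ H) //; lia.
  apply: eq_big_nat => i /andP[i1 iis].
  by rewrite (att1_eq _ _ _ _ H) //; lia.
rewrite (@eq_cvg _ _ _ _ _ _ E).
have [->|s2] := eqVneq s 1%N.
  rewrite /Gb eqxx.
  under eq_cvg do rewrite big_nat1 big_nat1 /= mulr0 expR0 divr1 mul1r.
  exact: cvg_cst.
have s2' : (2 <= s)%N by lia.
have E2 : forall tau1 : R,
   \sum_(1 <= s' < s.+1) expR (tau1 * (s - s' == 1)%N%:R) /
     (\sum_(1 <= s'' < s.+1) expR (tau1 * (s - s'' == 1)%N%:R)) * (q == z s')%:R =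
   (\sum_(1 <= s' < s.+1) (q == z s')%:R + (expR tau1 - 1) * (q == z s.-1)%:R) /
   ((expR tau1 - 1) * 1 + s%:R).
  move=> tau1.
  rewrite -[in RHS](@sum_ind R s (expR tau1 - 1) (fun i => (q == z i)%:R) s2').
  have -> : (expR tau1 - 1) * 1 + s%:R = \sum_(1 <= s'' < s.+1) expR (tau1 * (s - s'' == 1)%N%:R).
    rewrite (eq_bigr (fun i => (1 + (expR tau1 - 1) * (s - i == 1)%N%:R) * 1)); last first.
      by move=> i _; rewrite expR_bool mulr1.
    rewrite sum_ind // sumr_const_nat subn1 /=; ring.
  rewrite mulr_suml; apply: eq_bigr => i _; rewrite expR_bool; ring.
rewrite (@eq_cvg _ _ _ _ _ _ E2).
rewrite /Gb (negbTE s2).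
have := @key_lim R (\sum_(1 <= s' < s.+1) (q == z s')%:R) (q == z s.-1)%:R 1 s%:R ltr01.
rewrite divr1; apply.
by rewrite ler1n; lia.
Qed.



Lemma sum_expR_gt0 (R : realType) T (f : nat -> R) : (1 <= T)%N ->
  0 < \sum_(1 <= s < T.+1) expR (f s).
Proof.
move=> T1; rewrite big_ltn //.
have := expR_gt0 (f 1%N).
have : 0 <= \sum_(2 <= s < T.+1) expR (f s) by apply: sumr_ge0 => i _; exact: expR_ge0.
lra.
Qed.

Theorem corollary1 (R : realType) (V d T : nat) (M : model R V d)
  (z : nat -> 'I_V) (q v1 v2 : 'I_V) (tau3 : R) :
  orthonormality_A M T ->
  (forall u v, 0 < pib M u v) ->
  (forall v, \sum_(u < V) pib M u v = 1) ->
  0 < tau3 ->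
  (2 <= T)%N ->
  z T = q -> z 1%N != q ->
  v1 != v2 ->
  (forall v, v != v1 -> v != v2 -> fcount z T q v = 0%N) ->
  (1 <= fcount z T q v1 + fcount z T q v2)%N ->
  exists (L1 : R -> 'I_V -> R) (xistar : 'I_V -> R),
    (forall tau2, 0 < tau2 -> forall v,
       logit M z T tau1 tau2 tau3 v @[tau1 --> +oo] --> L1 tau2 v) /\
    (forall v, L1 tau2 v @[tau2 --> +oo] --> xistar v) /\
    (forall w, (forall v, xistar v <= xistar w) ->
       w = v1 \/ w = v2 \/
       [/\ w != v1, w != v2 &
           forall u, u != v1 -> u != v2 -> pib M u q <= pib M w q]).
Proof.
move=> H pos _ _ T2 zT z1 v12 f0 f1.
pose G (s : nat) : R := (Gb z q s)%:R.
pose n : R := \sum_(1 <= s < T.+1) G s.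
exists (fun tau2 v => ln (pib M v q) + tau3 * \sum_(1 <= s < T.+1)
   (expR (tau2 * G s) / (\sum_(1 <= s' < T.+1) expR (tau2 * G s')) * (v == z s)%:R)).
exists (fun v => ln (pib M v q) + tau3 * \sum_(1 <= s < T.+1) (G s / n * (v == z s)%:R)).
split.
  move=> tau2 _ v.
  rewrite (@eq_cvg _ _ _ _ _ _ (fun t => @logit_eq R V d T M z t tau2 tau3 v H)) zT.
  apply: cvgD; first exact: cvg_cst.
  apply: cvgM; first exact: cvg_cst.
  apply: cvg_sum_nat => s; rewrite mem_index_iota => /andP[s1 sT].
  rewrite /beta zT.
  apply: cvgM; last exact: cvg_cst.
  apply: cvgM.
    apply: cvg_expR_comp; apply: cvgM; first exact: cvg_cst.
    by apply: (gq_lim (T := T)) => //; lia.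
  apply: cvgV; first by rewrite gt_eqF // sum_expR_gt0 //; lia.
  apply: cvg_sum_nat => s'; rewrite mem_index_iota => /andP[s1' sT'].
  apply: cvg_expR_comp; apply: cvgM; first exact: cvg_cst.
  by apply: (gq_lim (T := T)) => //; lia.
have [s0 /andP[s02 s0T] s0q] : exists2 s, (2 <= s <= T)%N & z s.-1 == q.
  have : (0 < count (fun s => (z s.-1 == q) && (z s == v1)) (index_iota 2 T.+1))%N ||
         (0 < count (fun s => (z s.-1 == q) && (z s == v2)) (index_iota 2 T.+1))%N.
    by move: f1; rewrite /fcount; lia.
  by case/orP; rewrite -has_count => /hasP [s sr /andP[sq _]];
    exists s => //; rewrite mem_index_iota in sr; lia.
have Gs0 : G s0 = 1.
  rewrite /G /Gb.
  have -> : s0 == 1%N = false by apply/negbTE; lia.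
  by rewrite eq_sym s0q.
have Gle : forall s, G s <= 1 by move=> s; rewrite /G; case: (Gb z q s) => /=; rewrite ?ler01.
have Gge : forall s, 0 <= G s by move=> s; rewrite /G ler0n.
have n_gt0 : 0 < n.
  rewrite /n (bigD1_seq s0) ?mem_index_iota /=; [|lia|exact: iota_uniq].
  rewrite Gs0.
  have : 0 <= \sum_(i <- index_iota 1 T.+1 | i != s0) G i by apply: sumr_ge0.
  lra.
have n_leT : n <= T%:R.
  have -> : (T%:R : R) = \sum_(1 <= s < T.+1) 1 by rewrite sumr_const_nat subn1.
  by apply: ler_sum => s _.
split.
  move=> v; apply: cvgD; first exact: cvg_cst.
  apply: cvgM; first exact: cvg_cst.
  apply: cvg_sum_nat => s _.
  apply: cvgM; last exact: cvg_cst.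
  have E : forall tau2 : R, expR (tau2 * G s) / (\sum_(1 <= s' < T.+1) expR (tau2 * G s')) =
      (1 + (expR tau2 - 1) * G s) / ((expR tau2 - 1) * n + T%:R).
    move=> tau2; rewrite /G expR_bool.
    rewrite (eq_bigr (fun s' => 1 + (expR tau2 - 1) * G s')); last by move=> i _; rewrite expR_bool.
    rewrite big_split /= sumr_const_nat subn1 -mulr_sumr /n.
    congr (_ / _); ring.
  rewrite (@eq_cvg _ _ _ _ _ _ E).
  exact: key_lim.
have X0 : forall v, v != v1 -> v != v2 ->
    \sum_(1 <= s < T.+1) (G s / n * (v == z s)%:R) = 0.
  move=> v h1 h2.
  have : ~~ has (fun s => (z s.-1 == q) && (z s == v)) (index_iota 2 T.+1).
    by rewrite has_count; have := f0 v h1 h2; rewrite /fcount => ->.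
  move/hasPn => Hs.
  apply: big1_seq => s /andP[_]; rewrite mem_index_iota => /andP[s1 sT].
  rewrite /G /Gb.
  have [->|sn1] := eqVneq s 1%N.
    by rewrite eq_sym (negbTE z1) mul0r mul0r.
  have := Hs s; rewrite mem_index_iota => /(_ ltac:(lia)).
  rewrite eq_sym; case: (q == z s.-1) => //=; last by rewrite !mul0r.
  by rewrite eq_sym => /negbTE ->; rewrite mulr0.
move=> w Hw.
have [->|hw1] := eqVneq w v1; first by left.
have [->|hw2] := eqVneq w v2; first by right; left.
right; right; split => // u hu1 hu2.
have := Hw u; rewrite (X0 u hu1 hu2) (X0 w hw1 hw2) mulr0 !addr0.
by rewrite ler_ln // posrE.
Qed.
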